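(* Let $X$ be an operator on $(\mathbb C^d)^{\otimes n}$ that commutes with $P(\pi)$ for every permutation $\pi\in\mathfrak S_n$, where $P(\pi)|\psi_1\rangle\otimes\cdots\otimes|\psi_n\rangle=|\psi_{\pi^{-1}(1)}\rangle\otimes\cdots\otimes|\psi_{\pi^{-1}(n)}\rangle$. Then the number of distinct eigenvalues of $X$ satisfies $|\mathrm{spec}(X)|\le(n+1)^d(n+d)^{d^2}$. *)

(* Defs.v *)
From HB Require Import structures.
From mathcomp Require Import all_boot all_order all_algebra all_fingroup all_field.
Set Implicit Arguments. Unset Strict Implicit. Unset Printing Implicit Defensive.
Import Order.TTheory GRing.Theory Num.Theory.
Local Open Scope ring_scope.

(* Computational basis of (C^d)^{\otimes n}: tuples j = (j_1,...,j_n),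
   encoded as finite functions 'I_n -> 'I_d.  The Hilbert space has dimension
   tdim d n = #|{ffun 'I_n -> 'I_d}| (= d^n); basis vectors are indexed by
   ordinals 'I_(tdim d n) via enum_val / enum_rank. *)
Definition tbasis (d n : nat) := {ffun 'I_n -> 'I_d}.
Definition tdim (d n : nat) : nat := #|{ffun 'I_n -> 'I_d}|.

Definition tvec (d n : nat) (i : 'I_(tdim d n)) : {ffun 'I_n -> 'I_d} :=
  enum_val i.

(* P(pi) e_{j_1} (x) ... (x) e_{j_n} = e_{j_{pi^-1(1)}} (x) ... (x) e_{j_{pi^-1(n)}}:
   matrix entry (i, j) is 1 iff i_k = j_{pi^-1 k} for all k. *)
Definition permOp (d n : nat) (s : 'S_n) : 'M[algC]_(tdim d n) :=
  \matrix_(i, j) ((tvec i == [ffun k => tvec j (s^-1 k)%g]) %:R).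

(* Main.v *)
Require Import Defs.
From HB Require Import structures.
From mathcomp Require Import all_boot all_order all_algebra all_fingroup all_field.
Import Order.TTheory GRing.Theory Num.Theory.
Local Open Scope ring_scope.

Section S.
Variables d n : nat.
Local Notation T := {ffun 'I_n -> 'I_d}.
Local Notation C := {ffun 'I_d * 'I_d -> 'I_n.+1}.

Definition act (s : 'S_n) (f : T) : T := [ffun k => f (s^-1 k)%g].
Lemma actK s : cancel (act s) (act s^-1).
Proof. by move=> f; apply/ffunP=> k; rewrite !ffunE invgK permK. Qed.

Definition rk (x : T) : 'I_(tdim d n) := enum_rank x.
Lemma tvec_rk x : tvec (rk x) = x. Proof. exact: enum_rankK. Qed.
Lemma rk_tvec i : rk (tvec i) = i. Proof. exact: enum_valK. Qed.
Lemma rk_act_eq s x y : (rk (act s x) == rk (act s y)) = (x == y).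
Proof. by rewrite (inj_eq enum_rank_inj) (inj_eq (can_inj (actK s))). Qed.

Lemma permOpE s i j : permOp d s i j = (i == rk (act s (tvec j)))%:R.
Proof.
rewrite mxE; congr (_%:R); rewrite -/(act s (tvec j)).
by rewrite /rk -[in RHS](enum_valK i) (inj_eq enum_rank_inj).
Qed.

Lemma inv_of_comm (A : 'M[algC]_(tdim d n)) :
  (forall s, A *m permOp d s = permOp d s *m A) ->
  forall s x y, A (rk (act s x)) (rk (act s y)) = A (rk x) (rk y).
Proof.
move=> H s x y.
have := congr1 (fun M : 'M[algC]_(tdim d n) => M (rk (act s x)) (rk y)) (H s) => /=.
rewrite !mxE.
rewrite (bigD1 (rk (act s y))) //= big1 => [|l /negbTE Hl]; last first.
  by rewrite permOpE tvec_rk Hl mulr0.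
rewrite (bigD1 (rk x)) //= big1 => [|l Hl]; last first.
  rewrite permOpE rk_act_eq; case: eqP => [E|]; last by rewrite mul0r.
  by move: Hl; rewrite E rk_tvec eqxx.
by rewrite !permOpE !tvec_rk !eqxx mulr1 mul1r !addr0.
Qed.

Definition wt (p : T * T) := [tuple (p.1 k, p.2 k) | k < n].
Definition key (p : T * T) : C :=
  [ffun ab => inord (count_mem ab (wt p))].
Definition rep (c : C) : option (T * T) := [pick p | key p == c].

Lemma key_eq p q : key p = key q ->
  exists s, q.1 = act s p.1 /\ q.2 = act s p.2.
Proof.
move=> E.
have Hc ab : count_mem ab (wt q) = count_mem ab (wt p).
  have := congr1 (fun f : C => nat_of_ord (f ab)) E; rewrite /= !ffunE.
  have Hs r : (count_mem ab (wt r) < n.+1)%N.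
    by rewrite ltnS (leq_trans (count_size _ _)) // size_tuple.
  by rewrite !inordK.
have : perm_eq (wt q) (wt p).
  by apply/allP => x _; rewrite /= Hc.
case/tuple_permP => pi Hpi.
have Hk k : (q.1 k, q.2 k) = (p.1 (pi k), p.2 (pi k)).
  have := congr1 (fun t => tnth t k) (val_inj Hpi).
  by rewrite !tnth_mktuple.
exists pi^-1%g; split; apply/ffunP => k; rewrite ffunE invgK;
  by case: (Hk k) => E1 E2; rewrite ?E1 ?E2.
Qed.

Lemma vanish (A : 'M[algC]_(tdim d n)) :
  (forall s x y, A (rk (act s x)) (rk (act s y)) = A (rk x) (rk y)) ->
  (forall c, if rep c is Some p then A (rk p.1) (rk p.2) = 0 else True) ->
  A = 0.
Proof.
move=> Hi H0; apply/matrixP => i j; rewrite mxE.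
have := H0 (key (tvec i, tvec j)); rewrite /rep.
case: pickP => [q /eqP Hq|/(_ (tvec i, tvec j))]; last by rewrite eqxx.
have [s [/= E1 E2]] := key_eq _ _ Hq.
by rewrite -(rk_tvec i) -(rk_tvec j) E1 E2 Hi.
Qed.

End S.
Arguments rep {d n}. Arguments rk {d n}. Arguments vanish {d n}. Arguments inv_of_comm {d n}.

Lemma arith (n d : nat) : (n.+1 ^ (d * d) <= n.+1 ^ d * (n + d) ^ (d ^ 2))%N.
Proof.
case: d => [|d'] //.
have h : (0 < n.+1 ^ d'.+1)%N by rewrite expn_gt0.
apply: leq_trans (leq_pmull _ h).
by rewrite mulnn leq_exp2r ?expn_gt0 // -addSnnS leq_addr.
Qed.

Theorem lemmaA1 (d n : nat) (X : 'M[algC]_(tdim d n)) :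
  (forall s : 'S_n, X *m permOp d s = permOp d s *m X) ->
  forall spec : seq algC, uniq spec -> all (eigenvalue X) spec ->
    (size spec <= (n.+1) ^ d * (n + d) ^ (d ^ 2))%N.
Proof.
move=> HX spec Hu Hev.
set k := size spec.
set M := #|{ffun 'I_d * 'I_d -> 'I_n.+1}|.
pose B : 'M[algC]_(k, M) := \matrix_(i < k, c < M)
  (if rep (enum_val c) is Some p then (X ^+ i) (rk p.1) (rk p.2) else 0).
have HB i (c : {ffun 'I_d * 'I_d -> 'I_n.+1}) : B i (enum_rank c) =
    (if rep c is Some p then (X ^+ i) (rk p.1) (rk p.2) else 0).
  by rewrite /B mxE enum_rankK.
have HXi i s : X ^+ i *m permOp d s = permOp d s *m X ^+ i.
  elim: i => [|i IH]; first by rewrite expr0 mul1mx mulmx1.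
  by rewrite exprS -mulmxE -mulmxA IH !mulmxA HX.
have key_free : row_free B.
  rewrite -kermx_eq0; apply/eqP/row_matrixP => r; rewrite row0.
  set u := row r _.
  have /sub_kermxP Hu0 : (u <= kermx B)%MS by exact: row_sub.
  pose A := \sum_(i < k) u 0 i *: X ^+ i.
  have HA : A = 0.
    apply: (vanish A).
      apply: inv_of_comm => s.
      rewrite mulmx_suml mulmx_sumr; apply: eq_bigr => i _.
      by rewrite -scalemxAl -scalemxAr HXi.
    move=> c; have := congr1 (fun m : 'M[algC]_(1, M) => m 0 (enum_rank c)) Hu0.
    rewrite !mxE; under eq_bigr => i _ do rewrite HB.
    case: (rep c) => [p|] // E.
    apply: etrans E; rewrite /A summxE; apply: eq_bigr => i _.
    by rewrite mxE.
  pose uf i := \sum_(j < k | val j == i) u 0 j.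
  have ufE (j : 'I_k) : uf j = u 0 j.
    by rewrite /uf (big_pred1 j) // => l; rewrite /= val_eqE.
  pose P := \poly_(i < k) uf i.
  have HP : P = 0.
    apply/eqP; apply: contraT => HP0.
    have := max_poly_roots HP0 _ Hu.
    rewrite ltnNge (size_poly _ _) /=; apply.
    apply/allP => a /(allP Hev) /eigenvalueP [v Hv vN0].
    have Hvi i : v *m X ^+ i = a ^+ i *: v.
      elim: i => [|i IH]; first by rewrite expr0 mulmx1 expr0 scale1r.
      by rewrite exprSr -mulmxE mulmxA IH -scalemxAl Hv scalerA exprSr.
    have : v *m A = P.[a] *: v.
      rewrite horner_poly mulmx_sumr scaler_suml; apply: eq_bigr => i _.
      by rewrite -scalemxAr Hvi scalerA ufE.
    by rewrite HA mulmx0 => /esym/eqP; rewrite scaler_eq0 (negbTE vN0) orbF.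
  apply/rowP => i; rewrite [RHS]mxE.
  have := congr1 (fun q : {poly algC} => q`_i) HP; rewrite coef_poly ltn_ord coef0.
  by rewrite ufE.
have Hk : (k <= M)%N.
  by move: key_free; rewrite /row_free => /eqP <-; exact: rank_leq_col.
apply: (leq_trans Hk).
rewrite /M card_ffun card_prod !card_ord.
exact: arith.
Qed.
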